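(* Let $P$ be a finite poset, $\epsilon\in\{1,-1\}$ and $T^\xi$ ($\xi\in S^{(\epsilon)}$) a generator of $\omega^{(\epsilon)}$. Then $$\deg T^\xi\le\max\{q^{(\epsilon)}(x_0,y_0,\ldots,x_t,y_t): y_0,x_1,\ldots,y_{t-1},x_t \text{ is a } q^{(\epsilon)}\text{-reduced sequence satisfying condition N'},\ x_0=-\infty,\ y_t=\infty\}.$$
   Context: $P^\pm=P\cup\{-\infty,\infty\}$, $-\infty<z<\infty$ for $z\in P$; $P^-=P\cup\{-\infty\}$; $\xi^+(B)=\sum_{b\in B}\xi(b)$. Saturated chain: $x=z_0\lessdot\cdots\lessdot z_t=y$, length $t$. $q^{(\epsilon)}\mathrm{dist}(x,y)=\max\{\epsilon t:$ saturated chain of length $t$ from $x$ to $y$ in $P^\pm\}$. For $w_0<z_0>w_1<\cdots>w_s<z_s$ in $P^\pm$, $q^{(\epsilon)}(w_0,z_0,\ldots,w_s,z_s)=\sum_{\ell=0}^s q^{(\epsilon)}\mathrm{dist}(w_\ell,z_\ell)-\sum_{\ell=0}^{s-1}q^{(\epsilon)}\mathrm{dist}(w_{\ell+1},z_\ell)$. Condition N': $y_0>x_1<y_1>\cdots<y_{t-1}>x_t$ in $P$ and $y_i\not>x_j$ whenever $i\le j-2$ (empty sequence allowed, giving value $q^{(\epsilon)}\mathrm{dist}(-\infty,\infty)$). $q^{(\epsilon)}$-reduced: with $x_0=-\infty,y_t=\infty$, $q^{(\epsilon)}\mathrm{dist}(x_i,y_j)<q^{(\epsilon)}(x_i,y_i,\ldots,x_j,y_j)$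 whenever $0\le i<j\le t$ and $x_i<y_j$. $S^{(m)}=\{\xi\in\mathbb Z^{P^-}:\xi(x)\ge m\ \forall x\in P,\ \xi(-\infty)\ge\xi^+(C)+m$ for all maximal chains $C\}$. $R=\mathbb K[\mathcal C(P)]=\bigoplus_{S^{(0)}}\mathbb KT^\xi$ (Ehrhart ring of the chain polytope; $T^\xi=\prod T_x^{\xi(x)}$, $\deg T^\xi=\xi(-\infty)$), $\omega^{(1)}=\omega=\bigoplus_{S^{(1)}}\mathbb KT^\xi$ canonical ideal, $\omega^{(-1)}=R:\omega=\bigoplus_{S^{(-1)}}\mathbb KT^\xi$. A generator of $\omega^{(\epsilon)}$ is a monomial $T^\xi$, $\xi\in S^{(\epsilon)}$, not of the form $T^{\xi_1}T^{\xi_2}$ with $\xi_1\in S^{(0)}$, $\xi_1(-\infty)>0$, $\xi_2\in S^{(\epsilon)}$. *)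

(* Defs.v *)
From HB Require Import structures.
From mathcomp Require Import all_boot all_order all_algebra.
Set Implicit Arguments. Unset Strict Implicit. Unset Printing Implicit Defensive.
Import Order.TTheory GRing.Theory Num.Theory.

Section Ext.
Context {disp : Order.disp_t} (P : finPOrderType disp).

Inductive ext := NegInf | Elt of P | PosInf.

Definition ext_to (a : ext) : option (option P) :=
  match a with NegInf => None | Elt x => Some (Some x) | PosInf => Some None end.
Definition ext_of (o : option (option P)) : ext :=
  match o with None => NegInf | Some (Some x) => Elt x | Some None => PosInf end.
Lemma ext_toK : cancel ext_to ext_of. Proof. by case. Qed.

HB.instance Definition _ := Finite.copy ext (can_type ext_toK).

Definition ext_lt (a b : ext) : bool :=
  match a, b with
  | NegInf, NegInf => false
  | NegInf, _ => true
  | Elt x, Elt y => (x < y)%O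
  | Elt _, PosInf => true
  | _, _ => false
  end.

Definition ext_cov (a b : ext) : bool :=
  ext_lt a b && [forall c : ext, ~~ (ext_lt a c && ext_lt c b)].

Definition satchain (a b : ext) (t : nat) : bool :=
  [exists s : t.-tuple ext, path ext_cov a s && (last a s == b)].

(* max / min length of saturated chains from a to b (any saturated chain
   consists of distinct elements, so its length is < #|{: ext}|) *)
Definition maxlen (a b : ext) : nat :=
  \max_(t < #|{: ext}|.+1 | satchain a b t) t.
Definition minlen (a b : ext) : nat :=
  \big[minn/#|{: ext}|]_(t < #|{: ext}|.+1 | satchain a b t) t.

(* q^{(eps)}dist(a,b) = max { eps * t : saturated chain of length t from a to b } *)
Definition qdist (eps : int) (a b : ext) : int :=
  if (0 <= eps)%R then (eps * (maxlen a b)%:Z)%R else (eps * (minlen a b)%:Z)%R.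

(* A sequence y_0, x_1, ..., y_{t-1}, x_t of P is given by
   xs = [x_1; ...; x_t] and ys = [y_0; ...; y_{t-1}];
   with x_0 = -oo and y_t = +oo we get the following indexings. *)
Definition Xe (xs : seq P) (i : nat) : ext := nth NegInf (NegInf :: map Elt xs) i.
Definition Ye (ys : seq P) (i : nat) : ext := nth PosInf (map Elt ys) i.

Definition qseg (eps : int) (xs ys : seq P) (i j : nat) : int :=
  (\sum_(i <= l < j.+1) qdist eps (Xe xs l) (Ye ys l)
   - \sum_(i <= l < j) qdist eps (Xe xs l.+1) (Ye ys l))%R.

Definition condN (xs ys : seq P) : Prop :=
  let t := size xs in
  [/\ size ys = t,
      forall l, l < t -> ext_lt (Xe xs l.+1) (Ye ys l),
      forall l, 0 < l < t -> ext_lt (Xe xs l) (Ye ys l)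
    & forall i j, i.+2 <= j <= t -> ~~ ext_lt (Xe xs j) (Ye ys i)].

Definition qreduced (eps : int) (xs ys : seq P) : Prop :=
  forall i j, i < j <= size xs -> ext_lt (Xe xs i) (Ye ys j) ->
    (qdist eps (Xe xs i) (Ye ys j) < qseg eps xs ys i j)%R.

Definition is_chain (C : {set P}) : Prop :=
  forall x y, x \in C -> y \in C -> (x <= y)%O || (y <= x)%O.
Definition maxchain (C : {set P}) : Prop :=
  is_chain C /\ forall D : {set P}, is_chain D -> C \subset D -> D = C.

(* xi in Z^{P^-}: None stands for -oo, Some x for x in P *)
Definition inS (m : int) (xi : option P -> int) : Prop :=
  (forall x : P, (m <= xi (Some x))%R) /\
  (forall C : {set P}, maxchain C -> (\sum_(x in C) xi (Some x) + m <= xi None)%R).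

(* T^xi is a generator of omega^{(eps)}; T^xi1 T^xi2 = T^(xi1+xi2), deg T^xi = xi(-oo) *)
Definition generator (eps : int) (xi : option P -> int) : Prop :=
  inS eps xi /\
  ~ exists xi1 xi2 : option P -> int,
      [/\ inS 0 xi1, (0 < xi1 None)%R, inS eps xi2
        & forall z, xi z = (xi1 z + xi2 z)%R].

End Ext.

(* Main.v *)
Require Import Defs.
From HB Require Import structures.
From mathcomp Require Import all_boot all_order all_algebra.
From mathcomp Require Import zify ring lra.
From Stdlib Require Import Classical ClassicalEpsilon.
Import Order.TTheory GRing.Theory Num.Theory.

Lemma sum_shift (F : nat -> int) m n d :
  (\sum_(m <= l < n) F (l + d) = \sum_(m + d <= l < n + d) F l)%R.
Proof. by rewrite big_addn addnK. Qed.

Lemma qsurg (dd cr dd' cr' : nat -> int) i d t' :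
  (forall l, l < i -> dd' l = dd l) -> (forall l, l < i -> cr' l = cr l) ->
  (forall l, i < l -> dd' l = dd (l + d)) -> (forall l, i <= l -> cr' l = cr (l + d)) -> i <= t' ->
  (\sum_(0 <= l < t'.+1) dd' l - \sum_(0 <= l < t') cr' l =
   (\sum_(0 <= l < (t' + d).+1) dd l - \sum_(0 <= l < t' + d) cr l)
   - (\sum_(i <= l < (i + d).+1) dd l - \sum_(i <= l < i + d) cr l) + dd' i)%R.
Proof.
move=> h1 h2 h3 h4 hi.
have e1 : (\sum_(0 <= l < t'.+1) dd' l = \sum_(0 <= l < i) dd l + dd' i
            + \sum_((i + d).+1 <= l < (t' + d).+1) dd l)%R.
  rewrite (big_cat_nat (n := i)) /=; [|lia|lia].
  rewrite (big_ltn (m := i) (F := dd')); last lia.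
  rewrite addrA; congr (_ + _ + _)%R.
    by apply: eq_big_nat => l /andP[_ hl]; apply: h1.
  rewrite -!addSn -sum_shift; apply: eq_big_nat => l /andP[hl _]; exact: h3.
have e2 : (\sum_(0 <= l < t') cr' l = \sum_(0 <= l < i) cr l
            + \sum_(i + d <= l < t' + d) cr l)%R.
  rewrite (big_cat_nat (n := i)) /=; [|lia|lia]; congr (_ + _)%R.
    by apply: eq_big_nat => l /andP[_ hl]; apply: h2.
  rewrite -sum_shift; apply: eq_big_nat => l /andP[hl _]; exact: h4.
have e3 : (\sum_(0 <= l < (t' + d).+1) dd l = \sum_(0 <= l < i) dd l
            + \sum_(i <= l < (i + d).+1) dd l + \sum_((i + d).+1 <= l < (t' + d).+1) dd l)%R.
  rewrite (big_cat_nat (n := i)) /=; [|lia|lia].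
  by rewrite (big_cat_nat (m := i) (n := (i + d).+1)) /= ?addrA //; lia.
have e4 : (\sum_(0 <= l < t' + d) cr l = \sum_(0 <= l < i) cr l
            + \sum_(i <= l < i + d) cr l + \sum_(i + d <= l < t' + d) cr l)%R.
  rewrite (big_cat_nat (n := i)) /=; [|lia|lia].
  by rewrite (big_cat_nat (m := i) (n := i + d)) /= ?addrA //; lia.
rewrite e1 e2 e3 e4; ring.
Qed.

Set Implicit Arguments. Unset Strict Implicit. Unset Printing Implicit Defensive.

Section A.
Context {disp : Order.disp_t} (P : finPOrderType disp).
Local Notation ext := (ext P).
Local Notation ext_lt := (@ext_lt disp P).
Local Notation ext_cov := (@ext_cov disp P).

Lemma ext_lt_irr : irreflexive ext_lt.
Proof. by case=> //= x; rewrite ltxx. Qed.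

Lemma ext_lt_trans : transitive ext_lt.
Proof.
move=> b a c; case: a => [|x|]; case: b => [|y|]; case: c => [|z|] //=.
exact: lt_trans.
Qed.

Lemma ext_lt_asym a b : ext_lt a b -> ext_lt b a -> False.
Proof. by move=> h1 h2; have := ext_lt_trans h1 h2; rewrite ext_lt_irr. Qed.

Lemma ext_cov_lt : subrel ext_cov ext_lt.
Proof. by move=> a b /andP[]. Qed.

Lemma cov_path_lt a s : path ext_cov a s -> path ext_lt a s.
Proof. by apply: sub_path; exact: ext_cov_lt. Qed.

Lemma cov_path_min a s : path ext_cov a s -> all (ext_lt a) s.
Proof. by move/cov_path_lt; apply: order_path_min; exact: ext_lt_trans. Qed.

Lemma cov_path_uniq a s : path ext_cov a s -> uniq (a :: s).
Proof.
move=> h; apply: (sorted_uniq ext_lt_trans ext_lt_irr).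
exact: cov_path_lt.
Qed.

Lemma cov_path_size a s : path ext_cov a s -> size s < #|{: ext}|.+1.
Proof.
move=> /cov_path_uniq /card_uniqP /= h.
have := max_card (mem (a :: s)); rewrite h /=; lia.
Qed.

Lemma cov_path_last a s : path ext_cov a s -> s != [::] -> ext_lt a (last a s).
Proof.
move=> h; case/lastP: s h => [//|s y]; rewrite last_rcons => h _.
by have /allP := cov_path_min h; apply; rewrite mem_rcons inE eqxx.
Qed.

Lemma satchainP a b t :
  reflect (exists s, [/\ size s = t, path ext_cov a s & last a s = b]) (satchain a b t).
Proof.
apply: (iffP existsP) => [[s /andP[h1 /eqP h2]]|[s [h1 h2 h3]]].
  by exists (val s); rewrite size_tuple.
have hs : size s == t by apply/eqP.
by exists (Tuple hs); rewrite /= h2 h3 eqxx.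
Qed.

Lemma exists_cov_path_n n a b :
  #|[pred c | ext_lt a c && ext_lt c b]| <= n -> ext_lt a b ->
  exists s, path ext_cov a s /\ last a s = b.
Proof.
elim: n a b => [|n IH] a b hn hab.
  exists [:: b]; split => //=; rewrite andbT /ext_cov hab /=.
  apply/forallP => c; apply/negP => hc.
  move: hn; rewrite leqn0 => /eqP/card0_eq/(_ c); rewrite inE hc //.
case: (pickP [pred c | ext_lt a c && ext_lt c b]) => [c /= /andP[hac hcb]|h0].
  have hlt1 : #|[pred d | ext_lt a d && ext_lt d c]| <= n.
    have : #|[pred d | ext_lt a d && ext_lt d c]| < #|[pred c | ext_lt a c && ext_lt c b]|.
      apply: proper_card; apply/properP; split.
        apply/subsetP => d; rewrite !inE => /andP[-> /= hdc]; exact: ext_lt_trans hdc hcb.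
      by exists c; rewrite !inE ?hac ?hcb ?ext_lt_irr ?andbF.
    lia.
  have hlt2 : #|[pred d | ext_lt c d && ext_lt d b]| <= n.
    have : #|[pred d | ext_lt c d && ext_lt d b]| < #|[pred c | ext_lt a c && ext_lt c b]|.
      apply: proper_card; apply/properP; split.
        apply/subsetP => d; rewrite !inE => /andP[hcd ->]; rewrite andbT; exact: ext_lt_trans hac hcd.
      by exists c; rewrite !inE ?hac ?hcb ?ext_lt_irr.
    lia.
  have [s1 [p1 l1]] := IH _ _ hlt1 hac.
  have [s2 [p2 l2]] := IH _ _ hlt2 hcb.
  exists (s1 ++ s2); rewrite cat_path last_cat l1 p1 p2 l2; split => //.
exists [:: b]; split => //=; rewrite andbT /ext_cov hab /=.
apply/forallP => c; apply/negP => hc; by have := h0 c; rewrite /= hc.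
Qed.

Lemma exists_cov_path a b : ext_lt a b -> exists s, path ext_cov a s /\ last a s = b.
Proof. exact: exists_cov_path_n (leqnn _). Qed.

End A.


Lemma bigmin_le (I : eqType) r (P : pred I) (F : I -> nat) N i0 :
  i0 \in r -> P i0 -> \big[minn/N]_(i <- r | P i) F i <= F i0.
Proof.
move=> + Pi0; elim: r => // h t ih; rewrite inE big_cons.
move=> /predU1P[<-|i0t]; first by rewrite Pi0 geq_minl.
by case: ifPn => Ph; [rewrite geq_min ih// orbT|rewrite ih].
Qed.

Lemma bigmin_or (I : eqType) r (P : pred I) (F : I -> nat) N :
  \big[minn/N]_(i <- r | P i) F i = N \/
  exists2 i, i \in r & P i /\ \big[minn/N]_(i <- r | P i) F i = F i.
Proof.
elim: r => [|h t ih]; first by left; rewrite big_nil.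
rewrite big_cons; case: ifPn => Ph; last first.
  by case: ih => [->|[i it hi]]; [left|right; exists i; rewrite ?inE ?it ?orbT].
case: ih => [->|[i it [Pi ->]]].
  case: (leqP (F h) N) => hh; first by right; exists h; rewrite ?inE ?eqxx //; split => //; lia.
  by left; lia.
case: (leqP (F h) (F i)) => hh.
  by right; exists h; rewrite ?inE ?eqxx //; split => //; lia.
by right; exists i; rewrite ?inE ?it ?orbT //; split => //; lia.
Qed.

Lemma bigmin_att (I : eqType) r (P : pred I) (F : I -> nat) N i0 :
  i0 \in r -> P i0 -> F i0 <= N ->
  exists2 i, i \in r & P i /\ \big[minn/N]_(i <- r | P i) F i = F i.
Proof.
move=> ir Pi hN; have := bigmin_le F N ir Pi.
case: (bigmin_or r P F N) => [->|//] h.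
by exists i0 => //; split => //; lia.
Qed.

Section B.
Context {disp : Order.disp_t} (P : finPOrderType disp).
Local Notation ext := (ext P).
Local Notation ext_lt := (@ext_lt disp P).
Local Notation ext_cov := (@ext_cov disp P).

Lemma qdist_ub (eps : int) (a b : ext) s :
  eps = 1%R \/ eps = (-1)%R -> path ext_cov a s -> last a s = b ->
  (eps * (size s)%:Z <= qdist eps a b)%R.
Proof.
move=> he hp hl; have hs := cov_path_size hp.
have hsat : satchain a b (Ordinal hs) by apply/satchainP; exists s.
case: he => ->; rewrite /qdist /=.
  rewrite !mul1r lez_nat /maxlen.
  exact: (leq_bigmax_cond (Ordinal hs) (P := fun t : 'I_ _ => satchain a b t) (F := fun t => nat_of_ord t)).
rewrite mulN1r mulN1r lerN2 lez_nat /minlen.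
apply: (bigmin_le (fun t : 'I_ _ => nat_of_ord t) _ _ hsat) => //; exact: mem_index_enum.
Qed.

Lemma qdist_att (eps : int) (a b : ext) :
  eps = 1%R \/ eps = (-1)%R -> ext_lt a b ->
  exists s, [/\ path ext_cov a s, last a s = b & qdist eps a b = (eps * (size s)%:Z)%R].
Proof.
move=> he hab; have [s0 [hp hl]] := exists_cov_path hab.
have hs := cov_path_size hp.
have hsat : satchain a b (Ordinal hs) by apply/satchainP; exists s0.
case: he => ->; rewrite /qdist /=.
  rewrite /maxlen (bigop.bigmax_eq_arg (Ordinal hs)) //.
  case: arg_maxnP => // i hi _.
  have [s [h1 h2 h3]] := satchainP _ _ _ hi.
  by exists s; rewrite h1.
rewrite /minlen.
have [i _ [hi ->]] := bigmin_att (P := fun t : 'I_ _ => satchain a b t) (F := fun t : 'I_ _ => nat_of_ord t) (N := #|{: ext}|)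
   (mem_index_enum (Ordinal hs)) hsat (ltnSE (ltn_ord (Ordinal hs))).
have [s [h1 h2 h3]] := satchainP _ _ _ hi.
by exists s; rewrite h1.
Qed.

End B.


Section C.
Context {disp : Order.disp_t} (P : finPOrderType disp).
Local Notation ext := (ext P).
Local Notation ext_lt := (@ext_lt disp P).
Local Notation ext_cov := (@ext_cov disp P).
Local Notation NI := (@NegInf disp P).
Local Notation PI := (@PosInf disp P).

Definition Cset (p : seq ext) : {set P} := [set x | Elt x \in p].
Definition full (p : seq ext) := path ext_cov NI p && (last NI p == PI).

Definition ecomp (u v : ext) := [\/ u = v, ext_lt u v | ext_lt v u].

Lemma path_comp a s u v : path ext_lt a s -> u \in s -> v \in s -> ecomp u v.
Proof.
elim: s a => [//|h t IH] a /= /andP[_ hp].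
have hm := order_path_min (@ext_lt_trans _ P) hp.
rewrite !inE => /predU1P[->|ut] /predU1P[->|vt].
- by rewrite /ecomp; constructor 1.
- by constructor 2; move/allP: hm; apply.
- by constructor 3; move/allP: hm; apply.
- exact: IH hp ut vt.
Qed.

Lemma saturation a s v : path ext_cov a s -> ext_lt a v ->
  (v = last a s \/ ext_lt v (last a s)) ->
  (forall u, u \in s -> ecomp u v) -> v \in s.
Proof.
elim: s a => [|h t IH] a /=.
  move=> _ hav [hv|hva]; first by rewrite hv (@ext_lt_irr _ P) in hav.
  by have := ext_lt_asym hav hva.
move=> /andP[hcov hp] hav hl hc.
case: (hc h (mem_head _ _)) => [->|hhv|hvh]; first exact: mem_head.
  rewrite inE; apply/orP; right; apply: (IH h hp hhv hl) => u ut.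
  by apply: hc; rewrite inE ut orbT.
move: hcov => /andP[_ /forallP/(_ v)]; by rewrite hav hvh.
Qed.

Lemma full_chain p : full p -> maxchain (Cset p).
Proof.
move=> /andP[hp /eqP hl].
have hlt := cov_path_lt hp.
have hch : is_chain (Cset p).
  move=> x y; rewrite !inE => hx hy.
  case: (path_comp hlt hx hy) => [[->]|/=h|/= h]; first by rewrite lexx.
    by apply/orP; left; apply: ltW.
  by apply/orP; right; apply: ltW.
split => // D hD hsub; apply/setP => z; apply/idP/idP; last by move/(subsetP hsub).
move=> zD; rewrite inE; apply: (saturation hp) => //; first by rewrite hl; right.
rewrite /ecomp; case => [|x|] hu; [by constructor 2 | | by constructor 3].
have xD : x \in D by apply: (subsetP hsub); rewrite inE.
case/orP: (hD x z xD zD) => hxz.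
  by move: hxz; rewrite le_eqVlt => /orP[/eqP->|h]; [constructor 1|constructor 2].
by move: hxz; rewrite le_eqVlt => /orP[/eqP->|h]; [constructor 1|constructor 3].
Qed.

Lemma chain_path_n n (a b : ext) (C : {set P}) : #|C| <= n -> is_chain C -> ext_lt a b ->
  (forall c, c \in C -> ext_lt a (Elt c) /\ ext_lt (Elt c) b) ->
  exists s, [/\ path ext_cov a s, last a s = b & forall c, c \in C -> Elt c \in s].
Proof.
elim: n a b C => [|n IH] a b C hn hC hab hin.
  have [s [h1 h2]] := exists_cov_path hab; exists s; split => // c cC.
  by move: hn; rewrite leqn0 => /eqP/card0_eq/(_ c); rewrite cC.
case: (pickP (mem C)) => [c cC|h0]; last first.
  have [s [h1 h2]] := exists_cov_path hab; exists s; split => // c cC.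
  by have := h0 c; rewrite /= cC.
set L := [set d in C | (d < c)%O].
set U := [set d in C | (c < d)%O].
have hL : #|L| <= n.
  have : #|L| < #|C|; last by lia.
  apply: proper_card; apply/properP; split.
    by apply/subsetP => d; rewrite inE => /andP[].
  by exists c; rewrite // inE ltxx andbF.
have hU : #|U| <= n.
  have : #|U| < #|C|; last by lia.
  apply: proper_card; apply/properP; split.
    by apply/subsetP => d; rewrite inE => /andP[].
  by exists c; rewrite // inE ltxx andbF.
have [hac hcb] := hin c cC.
have [s1 [p1 l1 m1]] : exists s, [/\ path ext_cov a s, last a s = Elt c
   & forall d, d \in L -> Elt d \in s].
  apply: IH hL _ hac _.
    by move=> x y; rewrite !inE => /andP[hx _] /andP[hy _]; exact: hC.
  by move=> d; rewrite inE => /andP[dC hdc]; split => //; have [] := hin d dC.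
have [s2 [p2 l2 m2]] : exists s, [/\ path ext_cov (Elt c) s, last (Elt c) s = b
   & forall d, d \in U -> Elt d \in s].
  apply: IH hU _ hcb _.
    by move=> x y; rewrite !inE => /andP[hx _] /andP[hy _]; exact: hC.
  by move=> d; rewrite inE => /andP[dC hdc]; split => //; have [] := hin d dC.
exists (s1 ++ s2); split; first by rewrite cat_path p1 l1 p2.
  by rewrite last_cat l1.
move=> d dC; rewrite mem_cat.
case/orP: (hC d c dC cC) => hdc; move: hdc; rewrite le_eqVlt => /orP[/eqP hdc|h].
- rewrite hdc; have := mem_last a s1; rewrite l1 inE => /predU1P[h|->//].
  by rewrite -h (@ext_lt_irr _ P) in hac.
- by rewrite m1 // inE dC h.
- rewrite -hdc; have := mem_last a s1; rewrite l1 inE => /predU1P[h'|->//].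
  by rewrite -h' (@ext_lt_irr _ P) in hac.
- by rewrite m2 ?orbT // inE dC h.
Qed.

Lemma maxchain_path C : maxchain C -> exists p, full p /\ Cset p = C.
Proof.
move=> [hC hmax].
have [s [h1 h2 h3]] := chain_path_n (leqnn #|C|) hC (erefl : ext_lt NI PI)
   (fun c _ => conj (erefl true) (erefl true)).
have hf : full s by rewrite /full h1 h2 eqxx.
exists s; split => //; apply: hmax; first by case: (full_chain hf).
by apply/subsetP => c cC; rewrite inE h3.
Qed.

Variables (eps : int) (xi : option P -> int).

Definition gw (u : ext) : int := if u is Elt x then xi (Some x) else 0.
Definition ww (u : ext) : int := if u is Elt x then (xi (Some x) - eps)%R else 0.
Definition pval (p : seq ext) : int := (\sum_(u <- p) ww u + eps * (size p)%:Z)%R.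

Definition unElt (u : ext) : option P := if u is Elt x then Some x else None.

Lemma sum_pmap (p : seq ext) : (\sum_(u <- p) gw u = \sum_(x <- pmap unElt p) xi (Some x))%R.
Proof. by elim: p => [|[|x|] t IH]; rewrite ?big_nil //= !big_cons /= ?add0r IH. Qed.

Lemma mem_map_unElt (p : seq ext) x : (Some x \in map unElt p) = (Elt x \in p).
Proof. by elim: p => [|[|y|] t IH] //=; rewrite !inE IH. Qed.

Lemma sum_addc (p : seq ext) (f : ext -> int) c :
  (\sum_(u <- p) (f u + c) = \sum_(u <- p) f u + c * (size p)%:Z)%R.
Proof.
elim: p => [|h t IH]; first by rewrite !big_nil mulr0 addr0.
rewrite !big_cons IH /= -addn1 PoszD mulrDr mulr1; ring.
Qed.

Lemma full_val p : full p -> pval p = (\sum_(x in Cset p) xi (Some x) + eps)%R.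
Proof.
move=> hf; have /andP[hp /eqP hl] := hf.
have hu := cov_path_uniq hp.
have hoc : ocancel unElt (@Elt _ P) by case.
have -> : (\sum_(x in Cset p) xi (Some x) = \sum_(u <- p) gw u)%R.
  rewrite sum_pmap big_uniq /=; last by case/andP: hu => _ hu'; exact: (pmap_uniq hoc hu').
  by apply: eq_bigl => x /=; rewrite /Cset inE mem_pmap mem_map_unElt.
rewrite /pval -sum_addc.
case/lastP: p hf hp hl hu => [//|p' y] hf hp; rewrite last_rcons => hl hu.
subst y.
rewrite -!cats1 !big_cat /= !big_seq1 /= add0r addr0; congr (_ + _)%R.
rewrite big_seq [in RHS]big_seq; apply: eq_bigr => u up.
have hmin := cov_path_min hp.
case: u up => [|x|] up /=.
- by move/allP: hmin => /(_ NI); rewrite mem_rcons inE up orbT => /(_ isT); rewrite (@ext_lt_irr _ P).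
- by rewrite subrK.
- by move: hu; rewrite /= -cats1 cat_uniq /= up /= !andbF.
Qed.
End C.


Section D.
Context {disp : Order.disp_t} (P : finPOrderType disp).
Local Notation ext := (ext P).
Local Notation ext_lt := (@ext_lt disp P).
Local Notation ext_cov := (@ext_cov disp P).
Local Notation NI := (@NegInf disp P).
Local Notation PI := (@PosInf disp P).
Variables (eps : int) (xi : option P -> int).
Hypothesis hgen : generator eps xi.

Lemma ww_ge0 u : (0 <= ww eps xi u)%R.
Proof. case: u => //= x; case: hgen => [[h _] _]; rewrite subr_ge0; exact: h. Qed.

Lemma inS_val p : full p -> (pval eps xi p <= xi None)%R.
Proof.
move=> hf; rewrite full_val //; case: hgen => [[_ h] _]; apply: h.
exact: full_chain.
Qed.

Lemma G_path (A : {set P}) :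
  (forall a b, a \in A -> b \in A -> (a <= b)%O -> a = b) ->
  (forall a, a \in A -> (eps < xi (Some a))%R) ->
  exists p, [/\ full p, pval eps xi p = xi None & forall a, a \in A -> Elt a \notin p].
Proof.
move=> hanti hA; apply: NNPP => hn.
case: hgen => hS hnd; apply: hnd.
pose xi1 (z : option P) : int := if z is Some x then Posz (x \in A) else 1%R.
have hcnt : forall C : {set P}, is_chain C ->
   (\sum_(x in C) xi1 (Some x) = if [pick x in C | x \in A] is Some _ then 1 else 0)%R.
  move=> C hC; case: pickP => [a /andP[aC aA]|h0].
    rewrite (bigD1 a aC) /= aA big1 ?addr0 // => x /andP[xC xa].
    case xA: (x \in A) => //; exfalso.
    case/orP: (hC x a xC aC) => h.
      by move/eqP: xa; apply; apply: hanti.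
    by move/eqP: xa; apply; apply/esym/hanti.
  rewrite big1 // => x xC /=; have := h0 x; rewrite /= xC /=; by case: (x \in A).
exists xi1, (fun z => xi z - xi1 z)%R; split => //.
- split => [x|C [hC _]]; first by rewrite /= lez_nat.
  rewrite addr0 hcnt //; by case: pickP.
- split => [x|C hC].
    rewrite /=; case xA: (x \in A) => /=.
      have h : (eps < xi (Some x))%R by exact: hA. lia.
    by case: hS => h _; have := h x; lia.
  rewrite sumrB /= (hcnt C (proj1 hC)).
  case: hS => _ /(_ C hC) hle.
  case: pickP => [a _|h0]; first by rewrite addrAC lerD2r.
  have [p [hf hp]] := maxchain_path hC.
  have hv := inS_val hf.
  have hneq : pval eps xi p <> xi None.
    move=> heq; apply: hn; exists p; split => // a aA.
    apply/negP => ap; have := h0 a; rewrite /= -hp /Cset inE ap aA //.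
  have hv' : (pval eps xi p < xi None)%R by rewrite lt_neqAle hv andbT; apply/eqP.
  rewrite full_val // hp in hv'.
  by rewrite subr0 -ltzD1 subrK.
- by move=> z; ring.
Qed.

End D.


Definition pb (Q : Prop) : bool := if excluded_middle_informative Q then true else false.
Lemma pbP (Q : Prop) : pb Q <-> Q.
Proof. by rewrite /pb; case: excluded_middle_informative. Qed.

Section E.
Context {disp : Order.disp_t} (P : finPOrderType disp).
Local Notation ext := (ext P).
Local Notation ext_lt := (@ext_lt disp P).
Local Notation ext_cov := (@ext_cov disp P).
Local Notation NI := (@NegInf disp P).
Local Notation PI := (@PosInf disp P).
Variables (eps : int) (xi : option P -> int).
Hypothesis hgen : generator eps xi.

Local Notation ww := (ww eps xi).
Local Notation pval := (pval eps xi).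

Definition hopw (x y : ext) (a m b : seq ext) :=
  [/\ full (a ++ rcons m y ++ b), pval (a ++ rcons m y ++ b) = xi None,
      last NI a = x & all (fun z => ww z == 0) m].
Definition hop x y := exists a m b, hopw x y a m b.

Definition Yv (ys : seq P) (y : ext) (l : nat) : ext := nth y (map (@Elt disp P) ys) l.

Definition GoodY (xs ys : seq P) (y : ext) :=
  [/\ size ys = size xs,
      forall l, l <= size xs -> hop (Xe xs l) (Yv ys y l)
    & forall l, l < size xs -> ext_lt (Xe xs l.+1) (Yv ys y l)].

Lemma Xe_rcons (xs : seq P) (x : P) l : l <= size xs -> Xe (rcons xs x) l = Xe xs l.
Proof.
move=> hl; rewrite /Xe map_rcons -rcons_cons nth_rcons /= size_map ltnS hl //.
Qed.

Lemma Xe_rcons_last (xs : seq P) (x : P) : Xe (rcons xs x) (size xs).+1 = Elt x.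
Proof. by rewrite /Xe map_rcons -rcons_cons nth_rcons /= size_map ltnn eqxx. Qed.

Lemma Yv_rcons (ys : seq P) (yy : P) (y : ext) l : l <= size ys -> Yv (rcons ys yy) y l = Yv ys (Elt yy) l.
Proof.
move=> hl; rewrite /Yv map_rcons nth_rcons size_map.
case: ltngtP hl => // h _; first by apply: set_nth_default; rewrite size_map.
by rewrite nth_default // size_map h.
Qed.

Lemma Yv_rcons_last (ys : seq P) (yy : P) (y : ext) : Yv (rcons ys yy) y (size ys).+1 = y.
Proof. by rewrite /Yv nth_default // size_map size_rcons. Qed.

Lemma GoodY_base (y : ext) : hop NI y -> GoodY [::] [::] y.
Proof. by move=> h; split => // l; rewrite leqn0 => /eqP ->. Qed.

Lemma GoodY_ext (xs ys : seq P) (yy x : P) (y' : ext) : GoodY xs ys (Elt yy) -> ext_lt (Elt x) (Elt yy) ->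
  hop (Elt x) y' -> GoodY (rcons xs x) (rcons ys yy) y'.
Proof.
move=> [hs hh hc] hxy hh'; split; first by rewrite !size_rcons hs.
  move=> l; rewrite size_rcons leq_eqVlt ltnS => /orP[/eqP->|hl].
    by rewrite Xe_rcons_last -hs Yv_rcons_last.
  by rewrite Xe_rcons // Yv_rcons ?hs //; apply: hh.
move=> l; rewrite size_rcons ltnS leq_eqVlt => /orP[/eqP->|hl].
  by rewrite Xe_rcons_last Yv_rcons ?hs // /Yv nth_default // size_map hs.
by rewrite Xe_rcons // Yv_rcons ?hs 1?ltnW //; apply: hc.
Qed.

Definition reach y := exists xs ys, GoodY xs ys y.
Definition Xs z := z = NI \/ exists y, reach y /\ ext_lt z y.

Lemma Xs_hop (z y : ext) : ~ reach PI -> Xs z -> hop z y -> reach y.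
Proof.
move=> hn; case: z => [|x|].
- by move=> _ h; exists [::], [::]; apply: GoodY_base.
- case => [//|[y0 [[xs [ys hg]] hl]]] hh.
  case: y0 hl hg => [//|yy|] hl hg; last by case: hn; exists xs, ys.
  by exists (rcons xs x), (rcons ys yy); apply: GoodY_ext.
- by case => [//|[y0 [_ hl]]].
Qed.

Lemma reach_PI : reach PI.
Proof.
apply: NNPP => hn.
pose InA (a : P) := [/\ ~ Xs (Elt a), (eps < xi (Some a))%R & reach (Elt a)].
pose A := [set a | pb (InA a)].
have [p [hf hv hav]] : exists p, [/\ full p, pval p = xi None & forall a, a \in A -> Elt a \notin p].
  apply: G_path => //.
    move=> a b; rewrite !inE => /pbP[ha _ _] /pbP[_ _ hb].
    rewrite le_eqVlt => /orP[/eqP //|hab].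
    by case: ha; right; exists (Elt b).
  by move=> a; rewrite inE => /pbP[].
have hfin : forall a, last NI a = PI -> Xs (last NI a) -> False.
  by move=> a ->; case => [//|[y [_ //]]].
suff : forall n a c, size c <= n -> p = a ++ c -> Xs (last NI a) -> False.
  by move/(_ (size p) [::] p (leqnn _) erefl); apply; left.
elim => [|n IH] a c hn0 hp hx.
  move: hn0; rewrite leqn0 size_eq0 => /eqP hc; subst c.
  apply: (hfin a) => //; move: hf => /andP[_ /eqP]; by rewrite hp cats0.
have [hc0|cne] := eqVneq c [::].
  subst c; apply: (hfin a) => //; move: hf => /andP[_ /eqP]; by rewrite hp cats0.
pose stop z := (ww z != 0%R) || (z == PI).
have hstop : has stop c.
  apply/hasP; exists PI; last by rewrite /stop eqxx orbT.
  move: hf => /andP[_ /eqP]; rewrite hp last_cat.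
  case: c cne {hn0 hp} => [//|h t] _ hl; rewrite -hl /=; exact: mem_last.
have [j hjd] : exists j, j = find stop c by eexists.
have hj : j < size c by rewrite hjd -has_find.
have [v hvd] : exists v, v = nth NI c j by eexists.
have hsv : stop v by rewrite hvd hjd; apply: nth_find.
have hc : c = rcons (take j c) v ++ drop j.+1 c.
  by rewrite cat_rcons hvd -drop_nth // cat_take_drop.
have hall : all (fun z => ww z == 0%R) (take j c).
  apply/(all_nthP NI) => i; rewrite size_takel; last exact: ltnW hj.
  move=> hi.
  rewrite nth_take //; have := before_find NI (eq_ind _ (fun k => i < k) hi _ hjd); rewrite /stop.
  by case: (ww _ == 0%R) => //=.
have hhop : hop (last NI a) v.
  exists a, (take j c), (drop j.+1 c); rewrite /hopw -hc -hp; split; [exact: hf|exact: hv|reflexivity|exact: hall].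
have hrv := Xs_hop hn hx hhop.
case hv0 : v => [|a0|].
- by move: hsv; rewrite hv0 /stop /=.
- have vp : Elt a0 \in p by rewrite hp mem_cat -hv0 hvd mem_nth ?orbT.
  have a0A : a0 \notin A by apply/negP => /hav; rewrite vp.
  have hlt : (eps < xi (Some a0))%R.
    move: hsv; rewrite /stop hv0 orbF /= => hne.
    have := ww_ge0 hgen (Elt a0); rewrite /= le_eqVlt eq_sym (negbTE hne) /= subr_gt0 //.
  have hX : Xs (Elt a0).
    apply: NNPP => hnX; move/negP: a0A; apply; rewrite inE; apply/pbP; split => //.
    by rewrite -hv0.
  apply: (IH (a ++ rcons (take j c) v) (drop j.+1 c)).
  - have hs := congr1 size hc; rewrite size_cat size_rcons in hs; lia.
  - by rewrite hp -catA -hc.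
  - by rewrite last_cat last_rcons hv0.
- by apply: hn; rewrite -hv0.
Qed.

End E.


Section F.
Context {disp : Order.disp_t} (P : finPOrderType disp).
Local Notation ext := (ext P).
Local Notation ext_lt := (@ext_lt disp P).
Local Notation ext_cov := (@ext_cov disp P).
Local Notation NI := (@NegInf disp P).
Local Notation PI := (@PosInf disp P).
Variables (eps : int) (xi : option P -> int).
Hypothesis heps : eps = 1%R \/ eps = (-1)%R.
Hypothesis hgen : generator eps xi.

Local Notation ww := (ww eps xi).
Local Notation hopw := (hopw eps xi).
Local Notation hop := (hop eps xi).

Lemma pval_cat s1 s2 : pval eps xi (s1 ++ s2) = (pval eps xi s1 + pval eps xi s2)%R.
Proof. by rewrite /pval big_cat /= size_cat PoszD mulrDr addrACA. Qed.

Lemma sum_ww_ge0 (s : seq ext) : (0 <= \sum_(u <- s) ww u)%R.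
Proof. by apply: sumr_ge0 => u _; apply: ww_ge0. Qed.

Lemma hop_dec x y a m b : hopw x y a m b ->
  [/\ path ext_cov NI a, last NI a = x, path ext_cov y b, last y b = PI &
      (xi None <= (\sum_(u <- a) ww u + eps * (size a)%:Z) + qdist eps x y + ww y
                 + \sum_(u <- b) ww u + eps * (size b)%:Z)%R].
Proof.
case=> /andP[hp /eqP hl] hv hx hm.
move: hp; rewrite !cat_path => /and3P[pa pm pb].
move: pm; rewrite hx => pm.
rewrite !last_cat hx last_rcons in hl pb.
split => //.
have hq := qdist_ub heps pm (last_rcons x m y).
have hsm : (\sum_(u <- m) ww u = 0)%R.
  by rewrite big_seq big1 // => u um; move/allP: hm => /(_ u um) /eqP.
move: hv; rewrite !pval_cat /pval -cats1 big_cat /= big_seq1 hsm add0r size_cat /=.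
move=> <-; move: hq; rewrite -cats1 size_cat /=; lra.
Qed.

Lemma qseg_step (F G : nat -> int) k :
  (\sum_(0 <= l < k.+2) F l - \sum_(0 <= l < k.+1) G l =
   (\sum_(0 <= l < k.+1) F l - \sum_(0 <= l < k) G l) + F k.+1 - G k)%R.
Proof. rewrite (big_nat_recr k.+1 0 F) // (big_nat_recr k 0 G) //=. ring. Qed.

Lemma path_last_eq (x : ext) a : path ext_cov x a -> last x a = x -> a = [::].
Proof.
case: a => [//|h t] hp hl; have := cov_path_last hp; rewrite hl (@ext_lt_irr _ P).
by move/(_ isT).
Qed.

Lemma invariant (xs ys : seq P) : GoodY eps xi xs ys PI -> forall k, k <= size xs ->
  exists b, [/\ path ext_cov (Ye ys k) b, last (Ye ys k) b = PI &
    (xi None <= qseg eps xs ys 0 k + ww (Ye ys k) + \sum_(u <- b) ww u + eps * (size b)%:Z)%R].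
Proof.
move=> [hs hh0 hc0].
have hh : forall l, l <= size xs -> hop (Xe xs l) (Ye ys l) := hh0.
have hc : forall l, l < size xs -> ext_lt (Xe xs l.+1) (Ye ys l) := hc0.
clear hh0 hc0; elim => [|k IH] hk.
  have [a [m [b hw]]] := hh 0 (leq0n _).
  have [pa la pb lb hb] := hop_dec hw.
  have a0 := path_last_eq pa la; subst a.
  exists b; split => //.
  move: hb; rewrite /qseg big_nat1 big_geq // big_nil /= subr0; lra.
have [b0 [pb0 lb0 hb0]] := IH (ltnW hk).
have hcr := hc k hk.
have [s [ps ls qs]] := qdist_att heps hcr.
have [a1 [m1 [b1 hw]]] := hh k.+1 hk.
have [pa1 la1 pb1 lb1 hb1] := hop_dec hw.
have hD : full (a1 ++ s ++ b0).
  by rewrite /full !cat_path !last_cat la1 pa1 ps ls pb0 lb0 eqxx.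
have hvD := inS_val hgen hD.
have hsne : s != [::].
  by apply/eqP => s0; move: ls; rewrite s0 /= => hh0; move: hcr; rewrite -hh0 (@ext_lt_irr _ P).
have hsum : (ww (Ye ys k) <= \sum_(u <- s) ww u)%R.
  case/lastP: s hsne ls {ps qs hD hvD} => [//|s' z] _; rewrite last_rcons => ->.
  rewrite -cats1 big_cat big_seq1 /= lerDr; exact: sum_ww_ge0.
exists b1; split => //.
move: hvD; rewrite !pval_cat /pval => hvD.
have -> : qseg eps xs ys 0 k.+1 = (qseg eps xs ys 0 k + qdist eps (Xe xs k.+1) (Ye ys k.+1)
   - qdist eps (Xe xs k.+1) (Ye ys k))%R.
  exact: (qseg_step (fun l => qdist eps (Xe xs l) (Ye ys l)) (fun l => qdist eps (Xe xs l.+1) (Ye ys l)) k).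
rewrite -qs in hvD.
move: hb0 hb1 hvD hsum.
move: (qdist eps (Xe xs k.+1) (Ye ys k.+1)) (qdist eps (Xe xs k.+1) (Ye ys k)) (qseg eps xs ys 0 k) => d1 d0 Q0.
move: (xi None) (ww (Ye ys k)) (ww (Ye ys k.+1)) (\sum_(u <- a1) ww u)%R (\sum_(u <- s) ww u)%R
  (\sum_(u <- b0) ww u)%R (\sum_(u <- b1) ww u)%R (eps * (size a1)%:Z)%R (eps * (size b0)%:Z)%R
  (eps * (size b1)%:Z)%R => X w0 w1 Sa Ss Sb0 Sb1 ea eb0 eb1.
lia.
Qed.

Lemma good_bound (xs ys : seq P) : GoodY eps xi xs ys PI ->
  (xi None <= qseg eps xs ys 0 (size xs))%R.
Proof.
move=> hg; have [hs _ _] := hg.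
have [b [pb lb hb]] := invariant hg (leqnn _).
have hY : Ye ys (size xs) = PI by rewrite /Ye nth_default // size_map hs.
rewrite hY in pb lb hb.
case: b pb lb hb => [_ _ hb|h t pb _ _]; last by case/andP: pb => /andP[].
have w0 : ww PI = 0%R by [].
by move: hb; rewrite big_nil w0 mulr0 !addr0.
Qed.

End F.


Section G.
Context {disp : Order.disp_t} (P : finPOrderType disp).
Local Notation ext := (ext P).
Local Notation ext_lt := (@ext_lt disp P).
Local Notation ext_cov := (@ext_cov disp P).
Local Notation NI := (@NegInf disp P).
Local Notation PI := (@PosInf disp P).

Definition surg (s : seq P) n d := take n s ++ drop (n + d) s.

Lemma size_surg (s : seq P) n d : n + d <= size s -> size (surg s n d) = size s - d.
Proof. move=> h; rewrite /surg size_cat size_takel ?size_drop; lia. Qed.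

Lemma Xe_surg (xs : seq P) n d l : n + d <= size xs ->
  Xe (surg xs n d) l = Xe xs (if l <= n then l else l + d).
Proof.
move=> h; case: l => [//|l]; rewrite /Xe /surg /= map_cat map_take map_drop.
rewrite nth_cat size_takel ?size_map; last lia.
case: ltnP => hl; first by rewrite nth_take.
by rewrite nth_drop addSn /=; congr nth; lia.
Qed.


Lemma Ye_surg (ys : seq P) n d l : n + d <= size ys ->
  Ye (surg ys n d) l = Ye ys (if l < n then l else l + d).
Proof.
move=> h; rewrite /Ye /surg map_cat map_take map_drop.
rewrite nth_cat size_takel ?size_map; last lia.
case: ltnP => hl; first by rewrite nth_take.
by rewrite nth_drop; congr nth; lia.
Qed.

Variables (eps : int) (xi : option P -> int).
Hypothesis heps : eps = 1%R \/ eps = (-1)%R.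
Hypothesis hgen : generator eps xi.
Local Notation hop := (hop eps xi).

Lemma hop_lt x y : hop x y -> ext_lt x y.
Proof.
case=> a [m [b [/andP[hp _] _ hx _]]].
move: hp; rewrite !cat_path => /and3P[_ pm _].
have := cov_path_last pm; rewrite hx last_rcons; apply.
by case: m {pm}.
Qed.

Definition Good (xs ys : seq P) :=
  [/\ size ys = size xs, forall l, l <= size xs -> hop (Xe xs l) (Ye ys l)
    & forall l, l < size xs -> ext_lt (Xe xs l.+1) (Ye ys l)].

Lemma phase1 n (xs ys : seq P) : size xs <= n -> Good xs ys ->
  exists xs' ys', Good xs' ys' /\ condN xs' ys'.
Proof.
elim: n xs ys => [|n IH] xs ys hn hg.
  exists xs, ys; split => //; case: hg => hs hh hc; split => //.
  - by move=> l /andP[h1 h2]; lia.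
  - by move=> i j /andP[h1 h2]; lia.
case: (classic (exists i j, i.+2 <= j <= size xs /\ ext_lt (Xe xs j) (Ye ys i))); last first.
  move=> hno; exists xs, ys; split => //; case: hg => hs hh hc; split => //.
  - by move=> l /andP[h1 h2]; apply: hop_lt; apply: hh; lia.
  - move=> i j hij; apply/negP => hlt; apply: hno; exists i, j; split => //.
move=> [i [j [/andP[hij hjt] hlt]]].
case: hg => hs hh hc.
pose d := j - i.+1.
have hd1 : i + d <= size xs by lia.
have hd2 : i.+1 + d <= size ys by lia.
apply: (IH (surg xs i d) (surg ys i.+1 d)).
  rewrite size_surg //; lia.
split.
- by rewrite !size_surg // hs.
- move=> l; rewrite size_surg // => hl.
  rewrite Xe_surg // Ye_surg // ltnS.
  case: leqP => hli; first by apply: hh; lia.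
  by apply: hh; lia.
- move=> l; rewrite size_surg // => hl.
  rewrite Xe_surg // Ye_surg // ltnS.
  case: (ltnP l i) => hli.
    by rewrite (ltnW hli); apply: hc; lia.
  case: (eqVneq l i) => [eli|nli].
    subst l; rewrite leqnn.
    by have -> : i.+1 + d = j by lia.
  have h2 : (l <= i) = false by lia.
  rewrite h2 addSn; apply: hc; lia.
Qed.

End G.


Section H.
Context {disp : Order.disp_t} (P : finPOrderType disp).
Local Notation ext := (ext P).
Local Notation ext_lt := (@ext_lt disp P).
Variables (eps : int) (D0 : int).

Lemma phase2 n (xs ys : seq P) : size xs <= n -> condN xs ys ->
  (D0 <= qseg eps xs ys 0 (size xs))%R ->
  exists xs' ys' : seq P, [/\ condN xs' ys', qreduced eps xs' ys' & (D0 <= qseg eps xs' ys' 0 (size xs'))%R].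
Proof.
elim: n xs ys => [|n IH] xs ys hn hcN hq.
all: case: (classic (qreduced eps xs ys)) => [hr|hnr]; first by exists xs, ys.
all: have [i [j [/andP[hij hjt] [hlt hqle]]]] : exists i j, (i < j <= size xs) /\
   (ext_lt (Xe xs i) (Ye ys j) /\ (qseg eps xs ys i j <= qdist eps (Xe xs i) (Ye ys j))%R).
all: try (apply: NNPP => hne; apply: hnr => i j hij hl; apply: NNPP => hq'; apply: hne;
      exists i, j; split => //; split => //; rewrite leNgt; apply/negP => h; exact: hq' h).
  by lia.
case: hcN => hs hcr hdg hinc.
pose d := j - i.
have hd : i + d = j by rewrite /d; lia.
have hd1 : i + d <= size xs by lia.
have hd2 : i + d <= size ys by lia.
have ht : size (surg xs i d) = size xs - d by rewrite size_surg.
apply: (IH (surg xs i d) (surg ys i d)).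
- rewrite ht; lia.
- split.
  + by rewrite !size_surg // hs.
  + move=> l; rewrite ht => hl; rewrite Xe_surg // Ye_surg //.
    case: (ltnP l i) => hli; first by apply: hcr; lia.
    by rewrite addSn; apply: hcr; lia.
  + move=> l; rewrite ht => /andP[hl0 hl]; rewrite Xe_surg // Ye_surg //.
    case: (ltnP l i) => hli; first by rewrite (ltnW hli); apply: hdg; lia.
    case: (eqVneq l i) => [eli|nli].
      by subst l; rewrite leqnn hd.
    have h2 : (l <= i) = false by lia.
    by rewrite h2; apply: hdg; lia.
  + move=> i1 j1; rewrite ht => /andP[h1 h2]; rewrite Xe_surg // Ye_surg //.
    by case: (leqP j1 i) => h3; case: (ltnP i1 i) => h4; apply: hinc; lia.
- have E : qseg eps (surg xs i d) (surg ys i d) 0 (size xs - d) =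
     (qseg eps xs ys 0 (size xs - d + d) - qseg eps xs ys i (i + d)
      + qdist eps (Xe (surg xs i d) i) (Ye (surg ys i d) i))%R.
    apply: (qsurg (fun l => qdist eps (Xe xs l) (Ye ys l))
                  (fun l => qdist eps (Xe xs l.+1) (Ye ys l))
                  (fun l => qdist eps (Xe (surg xs i d) l) (Ye (surg ys i d) l))
                  (fun l => qdist eps (Xe (surg xs i d) l.+1) (Ye (surg ys i d) l)) i d (size xs - d)).
    + by move=> l hl /=; rewrite Xe_surg // Ye_surg // (ltnW hl) hl.
    + by move=> l hl /=; rewrite Xe_surg // Ye_surg // hl.
    + move=> l hl /=; rewrite Xe_surg // Ye_surg //.
      have h2 : (l <= i) = false by lia.
      have h3 : (l < i) = false by lia.
      by rewrite h2 h3.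
    + move=> l hl /=; rewrite Xe_surg // Ye_surg //.
      have h2 : (l < i) = false by lia.
      by rewrite h2 addSn.
    + lia.
  rewrite ht E.
  have -> : size xs - d + d = size xs by lia.
  rewrite hd Xe_surg // Ye_surg // leqnn ltnn hd.
  apply: (le_trans hq); rewrite -addrA lerDl addrC subr_ge0 //.
Qed.

End H.

Theorem mainTheorem9 (disp : Order.disp_t) (P : finPOrderType disp) (eps : int)
  (Heps : eps = 1%R \/ eps = (-1)%R) (xi : option P -> int) :
  generator eps xi ->
  exists xs ys : seq P,
    [/\ condN xs ys, qreduced eps xs ys & (xi None <= qseg eps xs ys 0 (size xs))%R].
Proof.
move=> hgen.
have [xs [ys hg]] := reach_PI hgen.
have hG : Good eps xi xs ys := hg.
have [xs1 [ys1 [hG1 hN1]]] := phase1 Heps (leqnn _) hG.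
have hb := good_bound Heps hgen (hG1 : GoodY eps xi xs1 ys1 (@PosInf disp P)).
have [xs2 [ys2 [h1 h2 h3]]] := phase2 (leqnn _) hN1 hb.
by exists xs2, ys2.
Qed.
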